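(* Let $M>0$, $\frac32\le p\le2$, and let $v$ be a solution on $[0,T)\times\mathbb{R}$ of the Cauchy problem \[ \partial_t^2v-\partial_s^2v+W(s)v=h(s)|\partial_t v|^p,\qquad v(0,s)=\varepsilon f(s),\ \partial_tv(0,s)=\varepsilon g(s), \] with $\varepsilon>0$, $f,g\ge0$, $g\not\equiv0$, $\operatorname{supp}f,\operatorname{supp}g\subset\{|s|\le R\}$. Let $\phi\in C^2(\mathbb{R})$ be a positive solution of $\big(-\partial_s^2+W(s)+\frac1{4M^2}\big)\phi=0$ on $\mathbb{R}$ satisfying $C^{-1}e^{s/(2M)}\le\phi(s)\le Ce^{s/(2M)}$ for all $s\in\mathbb{R}$, and set $\psi(t,s)=e^{-t/(2M)}\phi(s)$. Define \[ \mathcal F(t)=\frac12\int_0^t\int_{\mathbb{R}}h(s)|\partial_\tau v(\tau,s)|^p\psi(\tau,s)\,ds\,d\tau+\frac{\varepsilon}{2}\int_{\mathbb{R}}\phi(s)g(s)\,ds. \] Then for all $t\in[0,T)$, $0\le\mathcal F(t)\le\int_{\mathbb{R}}\psi(t,s)\partial_tv(t,s)\,ds$, and there is a constant $C>0$ independent of $\varepsilon$ such that \[ \mathcal F'(t)\ge \frac{C\,\mathcal F(t)^p}{(t+R)^{p-1}},\qquad t\in[0,T). \]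
   Context: Let $M>0$. The Regge–Wheeler coordinate is $s(r)=r+2M\ln(r-2M)$ for $r\in(2M,\infty)$; this is a strictly increasing bijection onto $\mathbb{R}$, and $r=r(s)$ denotes its inverse. Set $F(s)=1-\frac{2M}{r(s)}$, $h(s)=F(s)\,r(s)^{1-p}$ and $W(s)=\frac{2MF(s)}{r(s)^3}$. Solutions are classical, and by finite speed of propagation $v(t,\cdot)$ is supported in $\{|s|\le t+R\}$. *)

(* Defs.v *)
From Stdlib Require Import Reals Lra Classical ClassicalEpsilon.
Open Scope R_scope.

(* Riemann integral over [a,b] (Stdlib RiemannInt); 0 if not Riemann integrable. *)
Definition Rint (f : R -> R) (a b : R) : R :=
  match excluded_middle_informative
          (exists I : R, exists pr : Riemann_integrable f a b, RiemannInt pr = I) with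
  | left H => proj1_sig (constructive_indefinite_description _ H)
  | right _ => 0
  end.

Definition lim_pinfty (g : R -> R) (l : R) : Prop :=
  forall eps, 0 < eps -> exists A0, forall A, A0 < A -> Rabs (g A - l) < eps.

(* Integral over the whole real line: lim_{A->+oo} int_{-A}^{A} f
   (0 if the limit does not exist). *)
Definition RintR (f : R -> R) : R :=
  match excluded_middle_informative (exists l, lim_pinfty (fun A => Rint f (- A) A) l) with
  | left H => proj1_sig (constructive_indefinite_description _ H)
  | right _ => 0
  end.

(* x^p for x >= 0 and p > 0, with 0^p = 0 (Stdlib Rpower needs x > 0). *)
Definition rpow (x p : R) : R := if Rle_dec x 0 then 0 else Rpower x p.

(* derivative of f at x relative to the set D (one-sided at endpoints) *)
Definition derivable_within (D : R -> Prop) (f : R -> R) (x l : R) : Prop :=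
  forall eps, 0 < eps -> exists delta, 0 < delta /\
    forall y, D y -> y <> x -> Rabs (y - x) < delta ->
      Rabs ((f y - f x) / (y - x) - l) < eps.

Definition in_time (T t : R) : Prop := 0 <= t < T.

Definition cont_strip (T : R) (u : R -> R -> R) : Prop :=
  forall t s, in_time T t -> forall eps, 0 < eps -> exists delta, 0 < delta /\
    forall t' s', in_time T t' -> Rabs (t' - t) < delta -> Rabs (s' - s) < delta ->
      Rabs (u t' s' - u t s) < eps.

(* r is the inverse of the Regge-Wheeler coordinate s(r) = r + 2M ln(r - 2M) on (2M,oo) *)
Definition is_RW_inverse (M : R) (r : R -> R) : Prop :=
  forall s, 2 * M < r s /\ r s + 2 * M * ln (r s - 2 * M) = s.

Definition Ffun (M : R) (r : R -> R) (s : R) : R := 1 - 2 * M / r s.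
Definition hfun (M p : R) (r : R -> R) (s : R) : R := Ffun M r s * Rpower (r s) (1 - p).
Definition Wfun (M : R) (r : R -> R) (s : R) : R := 2 * M * Ffun M r s / (r s ^ 3).

Definition psi (M : R) (phi : R -> R) (t s : R) : R := exp (- t / (2 * M)) * phi s.

(* Classical (C^2) solution on [0,T) x R of
   v_tt - v_ss + W v = h |v_t|^p, v(0)=eps f, v_t(0)=eps g,
   with supp v(t,.) in {|s| <= t + R} (finite speed of propagation). *)
Definition is_solution (M p : R) (r : R -> R) (R0 eps : R) (f g : R -> R) (T : R)
  (v vt vs vtt vts vss : R -> R -> R) : Prop :=
  (forall t s, in_time T t ->
     derivable_within (in_time T) (fun x => v x s) t (vt t s) /\
     derivable_pt_lim (fun y => v t y) s (vs t s) /\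
     derivable_within (in_time T) (fun x => vt x s) t (vtt t s) /\
     derivable_pt_lim (fun y => vt t y) s (vts t s) /\
     derivable_pt_lim (fun y => vs t y) s (vss t s)) /\
  cont_strip T v /\ cont_strip T vt /\ cont_strip T vs /\
  cont_strip T vtt /\ cont_strip T vts /\ cont_strip T vss /\
  (forall t s, in_time T t ->
     vtt t s - vss t s + Wfun M r s * v t s = hfun M p r s * rpow (Rabs (vt t s)) p) /\
  (forall s, v 0 s = eps * f s /\ vt 0 s = eps * g s) /\
  (forall t s, in_time T t -> t + R0 < Rabs s -> v t s = 0).

Definition Fcal (M p : R) (r : R -> R) (phi g : R -> R) (eps : R)
  (vt : R -> R -> R) (t : R) : R :=
  / 2 * Rint (fun tau => RintR (fun s =>
            hfun M p r s * rpow (Rabs (vt tau s)) p * psi M phi tau s)) 0 t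
  + eps / 2 * RintR (fun s => phi s * g s).

(* Main.v *)
Require Import Defs.
From Stdlib Require Import Reals Lra Classical ClassicalEpsilon.
From Coquelicot Require Import Coquelicot.
Open Scope R_scope.

Lemma cont_conv f x : continuity_pt f x -> continuous f x.
Proof. intros H; now apply continuity_pt_filterlim. Qed.

Lemma Rint_RInt f a b : ex_RInt f a b -> Rint f a b = RInt f a b.
Proof.
  intros H. unfold Rint.
  destruct excluded_middle_informative as [E|E].
  - destruct (constructive_indefinite_description _ E) as [I [pr HI]]; simpl.
    rewrite <- HI. symmetry. apply RInt_Reals.
  - exfalso; apply E. exists (RiemannInt (ex_RInt_Reals_0 _ _ _ H)).
    exists (ex_RInt_Reals_0 _ _ _ H). reflexivity.
Qed.

Lemma RInt_zero_ext f a b : (forall x, Rmin a b < x < Rmax a b -> f x = 0) -> RInt f a b = 0.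
Proof.
  intros H. rewrite (RInt_ext f (fun _ => 0)) by auto.
  rewrite RInt_const. unfold scal; simpl. unfold mult; simpl. ring.
Qed.

Lemma ex_RInt_cont f a b : (forall x, continuity_pt f x) -> ex_RInt f a b.
Proof. intros H; apply (@ex_RInt_continuous R_CompleteNormedModule); intros; apply cont_conv, H. Qed.

Lemma RInt_shrink f L A : (forall x, continuity_pt f x) ->
  (forall x, L < Rabs x -> f x = 0) -> 0 <= L <= A ->
  RInt f (-A) A = RInt f (-L) L.
Proof.
  intros Hc Hz HL.
  rewrite <- (RInt_Chasles f (-A) (-L) A) by apply ex_RInt_cont, Hc.
  rewrite <- (RInt_Chasles f (-L) L A) by apply ex_RInt_cont, Hc.
  rewrite (RInt_zero_ext f (-A) (-L)).
  2:{ intros x Hx. apply Hz. rewrite Rmin_left in Hx by lra. rewrite Rmax_right in Hx by lra.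
      rewrite Rabs_left by lra. lra. }
  rewrite (RInt_zero_ext f L A).
  2:{ intros x Hx. apply Hz. rewrite Rmin_left in Hx by lra. rewrite Rmax_right in Hx by lra.
      rewrite Rabs_right by lra. lra. }
  unfold plus; simpl. ring.
Qed.

Lemma lim_unique g l1 l2 : lim_pinfty g l1 -> lim_pinfty g l2 -> l1 = l2.
Proof.
  intros H1 H2. destruct (Req_dec l1 l2) as [E|E]; auto. exfalso.
  assert (Hp : 0 < Rabs (l1 - l2) / 2). { assert (E' : l1 - l2 <> 0) by lra. apply Rabs_pos_lt in E'; lra. }
  destruct (H1 _ Hp) as [A1 HA1]. destruct (H2 _ Hp) as [A2 HA2].
  set (B := Rmax A1 A2 + 1).
  assert (h1 := HA1 B ltac:(unfold B; pose proof (Rmax_l A1 A2); lra)).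
  assert (h2 := HA2 B ltac:(unfold B; pose proof (Rmax_r A1 A2); lra)).
  assert (Rabs (l1 - l2) <= Rabs (g B - l1) + Rabs (g B - l2)).
  { replace (l1 - l2) with (-(g B - l1) + (g B - l2)) by ring.
    eapply Rle_trans; [apply Rabs_triang|]. rewrite Rabs_Ropp. lra. }
  lra.
Qed.

Lemma RintR_eq f L : (forall x, continuity_pt f x) ->
  (forall x, L < Rabs x -> f x = 0) -> 0 <= L -> RintR f = RInt f (-L) L.
Proof.
  intros Hc Hz HL.
  assert (Hlim : lim_pinfty (fun A => Rint f (-A) A) (RInt f (-L) L)).
  { intros e He. exists L. intros A HA. rewrite Rint_RInt by apply ex_RInt_cont, Hc.
    rewrite (RInt_shrink f L A) by (auto; lra). rewrite Rminus_diag, Rabs_R0. lra. }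
  unfold RintR. destruct excluded_middle_informative as [E|E].
  - destruct (constructive_indefinite_description _ E) as [l Hl]; simpl.
    eapply lim_unique; eauto.
  - exfalso; apply E; eauto.
Qed.

Lemma cont_pt_eps g z : continuity_pt g z -> forall e, 0 < e ->
  exists d, 0 < d /\ forall z', Rabs (z' - z) < d -> Rabs (g z' - g z) < e.
Proof.
  intros H e He. destruct (H e He) as [d [Hd Hz]]. exists d; split; auto.
  intros z' Hz'. destruct (Req_dec z' z) as [E|E].
  - subst. rewrite Rminus_diag, Rabs_R0; lra.
  - apply (Hz z'). split. split; [constructor| auto]. exact Hz'.
Qed.

Lemma eps_cont_pt g z : (forall e, 0 < e ->
  exists d, 0 < d /\ forall z', Rabs (z' - z) < d -> Rabs (g z' - g z) < e) -> continuity_pt g z.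
Proof.
  intros H e He. destruct (H e He) as [d [Hd Hz]]. exists d; split; auto.
  intros z' [_ Hz']. apply Hz. exact Hz'.
Qed.

Lemma c2d_comp g f x y : continuity_pt g (f x y) -> continuity_2d_pt f x y ->
  continuity_2d_pt (fun u v => g (f u v)) x y.
Proof.
  intros Hg Hf eps. destruct (cont_pt_eps _ _ Hg eps (cond_pos eps)) as [d [Hd Hz]].
  destruct (Hf (mkposreal d Hd)) as [d2 H2]. exists d2. intros u v Hu Hv.
  apply Hz. apply (H2 u v Hu Hv).
Qed.

Lemma c2d_snd g x y : continuity_pt g y -> continuity_2d_pt (fun _ v => g v) x y.
Proof. intros H. apply (c2d_comp g (fun _ v => v)); auto. apply continuity_2d_pt_id2. Qed.

Lemma c2d_fst g x y : continuity_pt g x -> continuity_2d_pt (fun u _ => g u) x y.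
Proof. intros H. apply (c2d_comp g (fun u _ => u)); auto. apply continuity_2d_pt_id1. Qed.

Lemma c2d_to_pt2 F x y : continuity_2d_pt F x y -> continuity_pt (F x) y.
Proof.
  intros H. apply eps_cont_pt. intros e He. destruct (H (mkposreal e He)) as [d Hd].
  exists d; split; [apply cond_pos|]. intros z Hz. apply Hd; simpl; auto.
  rewrite Rminus_diag, Rabs_R0; apply cond_pos.
Qed.

Lemma c2d_to_pt1 F x y : continuity_2d_pt F x y -> continuity_pt (fun u => F u y) x.
Proof.
  intros H. apply eps_cont_pt. intros e He. destruct (H (mkposreal e He)) as [d Hd].
  exists d; split; [apply cond_pos|]. intros z Hz. apply Hd; simpl; auto.
  rewrite Rminus_diag, Rabs_R0; apply cond_pos.
Qed.

Lemma c2d_loc_ext F G x y : continuity_2d_pt F x y ->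
  locally_2d (fun u v => G u v = F u v) x y -> continuity_2d_pt G x y.
Proof.
  intros H [d Hd] eps. destruct (H eps) as [d2 H2].
  exists (mkposreal _ (Rmin_pos _ _ (cond_pos d) (cond_pos d2))). simpl. intros u v Hu Hv.
  rewrite (Hd u v), (Hd x y). apply H2; eapply Rlt_le_trans; eauto; apply Rmin_r.
  all: try (rewrite Rminus_diag, Rabs_R0; apply cond_pos).
  all: eapply Rlt_le_trans; eauto; apply Rmin_l.
Qed.

Definition clamp (a b x : R) := Rmax a (Rmin b x).

Lemma clamp_in a b x : a <= b -> a <= clamp a b x <= b.
Proof. intros H; unfold clamp. split; [apply Rmax_l|]. apply Rmax_lub; auto. apply Rmin_l. Qed.

Lemma clamp_id a b x : a <= x <= b -> clamp a b x = x.
Proof. intros H; unfold clamp. rewrite Rmin_right by lra. rewrite Rmax_right; lra. Qed.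

Lemma clamp_lip a b x y : Rabs (clamp a b x - clamp a b y) <= Rabs (x - y).
Proof.
  unfold clamp, Rmax, Rmin.
  repeat (destruct Rle_dec); unfold Rabs; repeat destruct Rcase_abs; lra.
Qed.

Lemma cont_strip_c2d T u t1 : cont_strip T u -> 0 <= t1 < T ->
  forall x y, continuity_2d_pt (fun a b => u (clamp 0 t1 a) b) x y.
Proof.
  intros H Ht x y eps.
  assert (Hin : in_time T (clamp 0 t1 x)). { pose proof (clamp_in 0 t1 x). unfold in_time; lra. }
  destruct (H _ y Hin eps (cond_pos eps)) as [d [Hd Hu]].
  exists (mkposreal d Hd). simpl. intros a b Ha Hb. apply Hu; auto.
  - pose proof (clamp_in 0 t1 a). unfold in_time; lra.
  - eapply Rle_lt_trans; [apply clamp_lip|]. auto.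
Qed.

Lemma param_cont F a b u0 : (forall u s, continuity_2d_pt F u s) -> a <= b ->
  continuity_pt (fun u => RInt (F u) a b) u0.
Proof.
  intros HF Hab. apply eps_cont_pt. intros e He.
  set (e' := e / (b - a + 1)).
  assert (He' : 0 < e') by (unfold e'; apply Rdiv_lt_0_compat; lra).
  destruct (uniform_continuity_2d F (u0 - 1) (u0 + 1) a b (fun x y _ _ => HF x y)
              (mkposreal e' He')) as [d Hd].
  exists (Rmin d 1). split. { apply Rmin_pos; [apply cond_pos|lra]. }
  intros z Hz. pose proof (Rmin_l d 1). pose proof (Rmin_r d 1).
  assert (Ex : forall u, ex_RInt (F u) a b).
  { intros u. apply ex_RInt_cont. intros s. apply c2d_to_pt2, HF. }
  assert (E : RInt (F z) a b - RInt (F u0) a b = RInt (fun s => F z s - F u0 s) a b).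
  { symmetry. apply (RInt_minus (V := R_CompleteNormedModule)); auto. }
  rewrite E.
  assert (Hb : Rabs (RInt (fun s => F z s - F u0 s) a b) <= (b - a) * e').
  { apply (norm_RInt_le_const (V := R_NormedModule) (fun s => F z s - F u0 s) a b); auto.
    - intros s Hs. apply Rlt_le. apply (Hd u0 s z s); try lra.
      + assert (Rabs (z - u0) < 1) by lra. apply Rabs_def2 in H1; lra.
      + rewrite Rminus_diag, Rabs_R0; apply cond_pos.
    - apply (RInt_correct (V := R_CompleteNormedModule)).
      apply (ex_RInt_minus (V := R_NormedModule)); auto. }
  eapply Rle_lt_trans; [exact Hb|]. unfold e'.
  apply Rlt_le_trans with ((b - a + 1) * (e / (b - a + 1))).
  - apply Rmult_lt_compat_r; [apply He'|lra].
  - right; field; lra.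
Qed.

Lemma Rpower_pos x a : 0 < Rpower x a.
Proof. unfold Rpower; apply exp_pos. Qed.

Lemma Rpower_cont x a : 0 < x -> continuity_pt (fun x => Rpower x a) x.
Proof.
  intros Hx. apply (derivable_continuous_pt _ _ (exist _ _ (derivable_pt_lim_power x a Hx))).
Qed.

Lemma rpow_pos_eq x p : 0 < x -> rpow x p = Rpower x p.
Proof. intros H; unfold rpow; destruct Rle_dec; lra. Qed.

Lemma rpow_nonpos x p : x <= 0 -> rpow x p = 0.
Proof. intros H; unfold rpow; destruct Rle_dec; lra. Qed.

Lemma rpow_ge0 x p : 0 <= rpow x p.
Proof. unfold rpow; destruct Rle_dec; [lra|]. apply Rlt_le, Rpower_pos. Qed.

Lemma rpow_cont x0 p : 0 < p -> continuity_pt (fun x => rpow x p) x0.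
Proof.
  intros Hp. apply eps_cont_pt. intros e He.
  destruct (Rle_dec x0 0) as [H0|H0].
  - exists (Rpower e (/ p)). split; [apply Rpower_pos|]. intros z Hz.
    rewrite (rpow_nonpos x0) by auto. rewrite Rminus_0_r.
    destruct (Rle_dec z 0). { rewrite rpow_nonpos, Rabs_R0 by auto. lra. }
    rewrite rpow_pos_eq by lra. rewrite Rabs_right by (apply Rle_ge, Rlt_le, Rpower_pos).
    apply Rabs_def2 in Hz.
    replace e with (Rpower (Rpower e (/ p)) p).
    + apply Rlt_Rpower_l; lra.
    + rewrite Rpower_mult. rewrite Rinv_l by lra. apply Rpower_1; auto.
  - destruct (cont_pt_eps _ _ (Rpower_cont x0 p ltac:(lra)) e He) as [d [Hd Hz]].
    exists (Rmin d (x0 / 2)). split. { apply Rmin_pos; lra. }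
    intros z Hzz. pose proof (Rmin_l d (x0/2)). pose proof (Rmin_r d (x0/2)).
    assert (Hq : Rabs (z - x0) < x0 / 2) by lra. apply Rabs_def2 in Hq.
    rewrite !rpow_pos_eq by lra. apply Hz. lra.
Qed.

Lemma Rpower_mul_self Y a : 0 < Y -> Rpower Y a * Y = Rpower Y (a + 1).
Proof. intros H. rewrite Rpower_plus, Rpower_1; auto. Qed.

Lemma tangent_ineq p X Y : 1 < p -> 0 <= X -> 0 < Y ->
  Rpower Y p + p * Rpower Y (p - 1) * (X - Y) <= rpow X p.
Proof.
  intros Hp HX HY.
  assert (EY : Rpower Y (p - 1) * Y = Rpower Y p).
  { rewrite Rpower_mul_self by auto. f_equal; ring. }
  destruct (Req_dec X 0) as [E|E].
  - subst. rewrite rpow_nonpos by lra.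
    replace (Rpower Y p + p * Rpower Y (p - 1) * (0 - Y)) with ((1 - p) * Rpower Y p)
      by (rewrite <- EY; ring).
    pose proof (Rpower_pos Y p). nra.
  - rewrite rpow_pos_eq by lra.
    set (c0 := p * Rpower Y (p - 1)).
    set (ph := fun x => Rpower x p - c0 * x).
    assert (Hm : forall c, Rmin Y X <= c <= Rmax Y X -> 0 < c).
    { intros c Hc. pose proof (Rmin_glb_lt Y X 0). destruct Hc. apply Rlt_le_trans with (Rmin Y X); auto.
      apply Rmin_glb_lt; lra. }
    destruct (MVT_gen ph Y X (fun c => p * Rpower c (p - 1) - c0)) as [c [Hc Hmvt]].
    + intros x Hx. apply is_derive_Reals. unfold ph.
      apply derivable_pt_lim_minus.
      * apply derivable_pt_lim_power. apply Hm; lra.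
      * replace c0 with (c0 * 1) at 2 by ring. apply derivable_pt_lim_scal, derivable_pt_lim_id.
    + intros x Hx. unfold ph. apply continuity_pt_minus.
      * apply Rpower_cont, Hm; auto.
      * apply continuity_pt_scal, derivable_continuous_pt, derivable_pt_id.
    + assert (Hcp : 0 < c) by (apply Hm; auto).
      assert (Hprod : 0 <= (p * Rpower c (p - 1) - c0) * (X - Y)).
      { unfold c0. destruct (Rle_dec Y X) as [HYX|HYX].
        - rewrite Rmin_left, Rmax_right in Hc by lra.
          assert (Rpower Y (p - 1) <= Rpower c (p - 1)) by (apply Rle_Rpower_l; lra).
          replace ((p * Rpower c (p - 1) - p * Rpower Y (p - 1)) * (X - Y)) with
            (p * ((Rpower c (p - 1) - Rpower Y (p - 1)) * (X - Y))) by ring.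
          apply Rmult_le_pos; [lra|]. apply Rmult_le_pos; lra.
        - rewrite Rmin_right, Rmax_left in Hc by lra.
          assert (Rpower c (p - 1) <= Rpower Y (p - 1)) by (apply Rle_Rpower_l; lra).
          replace ((p * Rpower c (p - 1) - p * Rpower Y (p - 1)) * (X - Y)) with
            (p * ((Rpower Y (p - 1) - Rpower c (p - 1)) * (Y - X))) by ring.
          apply Rmult_le_pos; [lra|]. apply Rmult_le_pos; lra. }
      unfold ph in Hmvt. unfold c0 in *. rewrite <- EY. rewrite <- EY in Hmvt.
      nra.
Qed.

Section RW.
Variables (M : R) (r : R -> R).
Hypothesis HM : 0 < M.
Hypothesis Hr : is_RW_inverse M r.

Lemma r_gt s : 2 * M < r s.
Proof. apply (Hr s). Qed.

Lemma r_pos s : 0 < r s.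
Proof. pose proof (r_gt s); lra. Qed.

Lemma r_exp s : r s - 2 * M = exp ((s - r s) / (2 * M)).
Proof.
  destruct (Hr s) as [H1 H2].
  assert (E : ln (r s - 2 * M) = (s - r s) / (2 * M)).
  { field_simplify_eq; [lra|]. lra. }
  rewrite <- E, exp_ln; lra.
Qed.

Definition Sfun x := x + 2 * M * ln (x - 2 * M).

Lemma S_incr x y : 2 * M < x -> x < y -> Sfun x < Sfun y.
Proof.
  intros Hx Hxy. unfold Sfun. assert (ln (x - 2 * M) < ln (y - 2 * M)) by (apply ln_increasing; lra).
  nra.
Qed.

Lemma r_S s : Sfun (r s) = s.
Proof. apply (Hr s). Qed.

Lemma r_cont s : continuity_pt r s.
Proof.
  apply eps_cont_pt. intros e He.
  set (x0 := r s). pose proof (r_gt s) as Hx0. fold x0 in Hx0.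
  set (e1 := Rmin e ((x0 - 2 * M) / 2)).
  assert (He1 : 0 < e1) by (apply Rmin_pos; lra).
  assert (He1' : e1 <= (x0 - 2*M)/2) by apply Rmin_r.
  assert (He1e : e1 <= e) by apply Rmin_l.
  assert (Hs : Sfun x0 = s) by apply r_S.
  assert (H1 : Sfun (x0 - e1) < s) by (rewrite <- Hs; apply S_incr; lra).
  assert (H2 : s < Sfun (x0 + e1)) by (rewrite <- Hs; apply S_incr; lra).
  exists (Rmin (s - Sfun (x0 - e1)) (Sfun (x0 + e1) - s)). split.
  { apply Rmin_pos; lra. }
  intros z Hz. pose proof (Rmin_l (s - Sfun (x0 - e1)) (Sfun (x0 + e1) - s)).
  pose proof (Rmin_r (s - Sfun (x0 - e1)) (Sfun (x0 + e1) - s)).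
  apply Rabs_def2 in Hz. destruct Hz as [Hz1 Hz2].
  assert (A1 : r z < x0 + e1).
  { destruct (Rlt_le_dec (r z) (x0 + e1)) as [h|h]; auto.
    destruct (Req_dec (r z) (x0 + e1)) as [h2|h2].
    - exfalso. pose proof (r_S z). rewrite h2 in H3. lra.
    - assert (Sfun (x0 + e1) < Sfun (r z)) by (apply S_incr; lra). rewrite r_S in H3. lra. }
  assert (A2 : x0 - e1 < r z).
  { destruct (Rlt_le_dec (x0 - e1) (r z)) as [h|h]; auto.
    destruct (Req_dec (r z) (x0 - e1)) as [h2|h2].
    - exfalso. pose proof (r_S z). rewrite h2 in H3. lra.
    - pose proof (r_gt z). assert (Sfun (r z) < Sfun (x0 - e1)) by (apply S_incr; lra). rewrite r_S in H4. lra. }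
  fold x0. apply Rabs_def1; lra.
Qed.

Lemma F_eq s : Ffun M r s = (r s - 2 * M) / r s.
Proof. unfold Ffun. pose proof (r_pos s). field; lra. Qed.

Lemma F_pos s : 0 < Ffun M r s.
Proof. rewrite F_eq. pose proof (r_gt s). apply Rdiv_lt_0_compat; lra. Qed.

Lemma F_cont s : continuity_pt (Ffun M r) s.
Proof.
  unfold Ffun. apply continuity_pt_minus. apply continuity_pt_const; intros a b; auto.
  apply continuity_pt_div. apply continuity_pt_const; intros a b; auto. apply r_cont.
  pose proof (r_pos s); lra.
Qed.

Lemma h_pos p s : 0 < hfun M p r s.
Proof. unfold hfun. apply Rmult_lt_0_compat. apply F_pos. apply Rpower_pos. Qed.

Lemma h_cont p s : continuity_pt (hfun M p r) s.
Proof.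
  unfold hfun. apply continuity_pt_mult. apply F_cont.
  apply (continuity_pt_comp r (fun x => Rpower x (1 - p))). apply r_cont.
  apply Rpower_cont, r_pos.
Qed.

Lemma W_cont s : continuity_pt (Wfun M r) s.
Proof.
  unfold Wfun. apply continuity_pt_div.
  apply continuity_pt_mult. apply continuity_pt_const; intros a b; auto. apply F_cont.
  apply (continuity_pt_comp r (fun x => x ^ 3)). apply r_cont.
  apply derivable_continuous_pt, derivable_pt_pow.
  pose proof (r_pos s). apply pow_nonzero; lra.
Qed.

End RW.

Lemma exp_le_exp x y : x <= y -> exp x <= exp y.
Proof. intros [h|h]. apply Rlt_le, exp_increasing; auto. rewrite h; lra. Qed.

Section Bound.
Variables (M : R) (r : R -> R) (p R0 Cphi : R) (phi : R -> R).
Hypothesis HM : 0 < M.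
Hypothesis Hr : is_RW_inverse M r.
Hypothesis Hp : 3/2 <= p <= 2.
Hypothesis HR0 : 0 < R0.
Hypothesis HC : 0 < Cphi.
Hypothesis Hphi : forall s, phi s <= Cphi * exp (s / (2 * M)).

Definition K2 := Cphi * (2*M+1)^3 * exp ((2*(2*M+1) + R0) / (2*M)).
Definition K3 := Cphi * (1 + 2*M)^2.

Lemma psi_le t s : psi M phi t s <= Cphi * exp ((s - t) / (2 * M)).
Proof.
  unfold psi. replace ((s - t) / (2 * M)) with (- t / (2 * M) + s / (2 * M)) by (field; lra).
  rewrite exp_plus. pose proof (exp_pos (- t / (2 * M))). pose proof (Hphi s). nra.
Qed.

Lemma hpow_eq s : Rpower (hfun M p r s) (- / (p - 1)) = r s * / Rpower (Ffun M r s) (/ (p - 1)).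
Proof.
  unfold hfun. pose proof (F_pos M r HM Hr s). pose proof (r_pos M r HM Hr s).
  rewrite <- Rpower_mult_distr; auto; [|apply Rpower_pos].
  rewrite Rpower_mult. replace ((1 - p) * - / (p - 1)) with 1 by (field; lra).
  rewrite Rpower_1 by auto. rewrite Rpower_Ropp. ring.
Qed.

Lemma inv_pow_le s : / Rpower (Ffun M r s) (/ (p - 1)) <= / (Ffun M r s) ^ 2.
Proof.
  set (F := Ffun M r s). assert (HF : 0 < F) by apply (F_pos M r HM Hr s).
  assert (HF1 : F <= 1). { unfold F, Ffun. pose proof (r_pos M r HM Hr s).
    assert (0 < 2 * M / r s) by (apply Rdiv_lt_0_compat; lra). lra. }
  apply Rinv_le_contravar. { apply pow_lt; auto. }
  rewrite <- (Rpower_pow 2 F HF). replace (INR 2) with 2 by (simpl; ring).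
  unfold Rpower. apply exp_le_exp.
  assert (ln F <= 0). { rewrite <- ln_1. destruct HF1 as [h|h]. apply Rlt_le, ln_increasing; auto. rewrite h; lra. }
  assert (/ (p - 1) <= 2). { apply Rle_trans with (/ (1/2)). apply Rinv_le_contravar; lra. lra. }
  nra.
Qed.

Lemma pw_bound t s : 0 <= t -> - (t + R0) <= s <= t + R0 ->
  psi M phi t s * Rpower (hfun M p r s) (- / (p - 1)) <=
  K2 + K3 * (t + R0) * exp ((s - t) / (2 * M)).
Proof.
  intros Ht Hs. rewrite hpow_eq.
  set (a := r s). set (E := exp ((s - t) / (2 * M))).
  assert (Ha : 2 * M < a) by apply (r_gt M r Hr).
  assert (Hd : a - 2 * M = exp ((s - a) / (2 * M))) by apply (r_exp M r HM Hr).
  assert (HFe : Ffun M r s = (a - 2 * M) / a) by apply (F_eq M r HM Hr).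
  assert (HE : 0 < E) by apply exp_pos.
  assert (Hip := inv_pow_le s).
  pose proof (psi_le t s) as Hps. fold E in Hps.
  assert (Hpsi0 : 0 <= psi M phi t s \/ psi M phi t s < 0) by lra.
  assert (HK2 : 0 <= K2). { unfold K2. pose proof (exp_pos ((2*(2*M+1) + R0) / (2*M))).
    apply Rmult_le_pos; [|lra]. apply Rmult_le_pos; [lra|]. apply pow_le; lra. }
  assert (HK3 : 0 <= K3). { unfold K3. apply Rmult_le_pos; [lra|]. apply pow_le; lra. }
  assert (Hinvpos : 0 < / Rpower (Ffun M r s) (/ (p - 1))) by (apply Rinv_0_lt_compat, Rpower_pos).
  assert (Hbound : psi M phi t s * (a * / Rpower (Ffun M r s) (/ (p - 1))) <= Cphi * E * (a * (a / (a - 2*M))^2)).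
  { rewrite HFe in Hip |- *.
    replace (/ ((a - 2 * M) / a) ^ 2) with ((a / (a - 2 * M)) ^ 2) in Hip by (field; lra).
    assert (0 <= Cphi * E) by nra.
    destruct Hpsi0 as [h|h].
    - apply Rle_trans with (Cphi * E * (a * / Rpower ((a - 2 * M) / a) (/ (p - 1)))).
      + apply Rmult_le_compat_r; [|lra]. apply Rmult_le_pos; [lra|]. rewrite <- HFe. lra.
      + apply Rmult_le_compat_l; auto. apply Rmult_le_compat_l; lra.
    - apply Rle_trans with 0.
      + assert (0 < a * / Rpower ((a - 2 * M) / a) (/ (p - 1))).
        { apply Rmult_lt_0_compat; [lra|]. rewrite <- HFe. auto. }
        nra.
      + apply Rmult_le_pos; auto. apply Rmult_le_pos; [lra|]. apply pow_le.
        apply Rlt_le, Rdiv_lt_0_compat; lra. }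
  eapply Rle_trans; [rewrite <- Rmult_assoc in Hbound |- *; exact Hbound|].
  destruct (Rle_dec (2 * M + 1) a) as [Hbig|Hsmall].
  -
    assert (Hsa : a <= s).
    { destruct (Rle_dec a s); auto. exfalso.
      assert (exp ((s - a) / (2 * M)) < 1).
      { rewrite <- exp_0. apply exp_increasing. apply Rdiv_neg_pos; lra. } lra. }
    assert (Hq : a / (a - 2 * M) <= 1 + 2 * M).
    { apply Rle_div_l; [lra|]. nra. }
    assert (Hq0 : 0 <= a / (a - 2 * M)) by (apply Rlt_le, Rdiv_lt_0_compat; lra).
    assert ((a / (a - 2 * M)) ^ 2 <= (1 + 2 * M) ^ 2) by (apply pow_incr; lra).
    assert (a * (a / (a - 2 * M)) ^ 2 <= (t + R0) * (1 + 2 * M) ^ 2).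
    { apply Rmult_le_compat; try lra. apply pow_le; auto. }
    unfold K3. assert (0 <= Cphi * E) by nra. nra.
  -
    assert (Hinv : a / (a - 2 * M) = a * exp ((a - s) / (2 * M))).
    { rewrite Hd. unfold Rdiv. f_equal. rewrite <- exp_Ropp. f_equal. field; lra. }
    rewrite Hinv.
    replace (Cphi * E * (a * (a * exp ((a - s) / (2 * M))) ^ 2)) with
      (Cphi * a ^ 3 * (E * (exp ((a - s) / (2 * M)) * exp ((a - s) / (2 * M))))) by ring.
    unfold E. rewrite <- !exp_plus.
    assert (Hx : exp ((s - t) / (2 * M) + ((a - s) / (2 * M) + (a - s) / (2 * M))) <=
                 exp ((2 * (2 * M + 1) + R0) / (2 * M))).
    { apply exp_le_exp. apply Rle_trans with ((2 * a - s - t) / (2 * M)).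
      right; field; lra. apply Rmult_le_compat_r. apply Rlt_le, Rinv_0_lt_compat; lra. lra. }
    assert (a ^ 3 <= (2 * M + 1) ^ 3) by (apply pow_incr; lra).
    assert (0 <= a ^ 3) by (apply pow_le; lra).
    pose proof (exp_pos ((s - t) / (2 * M) + ((a - s) / (2 * M) + (a - s) / (2 * M)))).
    unfold K2.
    assert (Cphi * a ^ 3 * exp ((s - t) / (2 * M) + ((a - s) / (2 * M) + (a - s) / (2 * M)))
        <= Cphi * (2 * M + 1) ^ 3 * exp ((2 * (2 * M + 1) + R0) / (2 * M))).
    { apply Rmult_le_compat; try nra. }
    assert (0 <= K3 * (t + R0) * E) by (apply Rmult_le_pos; [apply Rmult_le_pos|]; lra).
    unfold K2 in *. unfold E in *. lra.
Qed.
End Bound.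

Lemma exp_lin_cont (a b : R) s : continuity_pt (fun s => exp ((s - a) / b)) s.
Proof.
  apply (continuity_pt_comp (fun s => (s - a) / b) exp).
  - unfold Rdiv. apply continuity_pt_mult. apply continuity_pt_minus.
    apply derivable_continuous_pt, derivable_pt_id. apply continuity_pt_const; intros x y; auto.
    apply continuity_pt_const; intros x y; auto.
  - apply derivable_continuous_pt, derivable_pt_exp.
Qed.

Lemma RInt_exp_lin a c L : 0 < c -> 0 <= L ->
  RInt (fun s => exp ((s - a) / c)) (-L) L = c * (exp ((L - a) / c) - exp ((-L - a) / c)).
Proof.
  intros Hc HL. apply is_RInt_unique.
  assert (H := is_RInt_derive (V := R_CompleteNormedModule) (fun s => c * exp ((s - a) / c)) (fun s => exp ((s - a) / c)) (-L) L).
  replace (c * (exp ((L - a) / c) - exp ((-L - a) / c))) with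
     (minus (c * exp ((L - a) / c)) (c * exp ((-L - a) / c))) by (unfold minus, plus, opp; simpl; ring).
  apply H.
  - intros x _. apply is_derive_Reals.
    replace (exp ((x - a) / c)) with (c * (exp ((x - a) / c) * (1 / c))) by (field; lra).
    apply derivable_pt_lim_scal.
    apply (derivable_pt_lim_comp (fun s => (s - a) / c) exp).
    + replace (1 / c) with ((1 - 0) * / c) by (field; lra). unfold Rdiv.
      apply derivable_pt_lim_scal_right. apply derivable_pt_lim_minus.
      apply derivable_pt_lim_id. apply derivable_pt_lim_const.
    + apply derivable_pt_lim_exp.
  - intros x _. apply cont_conv, exp_lin_cont.
Qed.

Section BInt.
Variables (M : R) (r : R -> R) (p R0 Cphi : R) (phi : R -> R).
Hypothesis HM : 0 < M.
Hypothesis Hr : is_RW_inverse M r.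
Hypothesis Hp : 3/2 <= p <= 2.
Hypothesis HR0 : 0 < R0.
Hypothesis HC : 0 < Cphi.
Hypothesis Hphi : forall s, phi s <= Cphi * exp (s / (2 * M)).
Hypothesis Hphic : forall s, continuity_pt phi s.

Definition Kc := 2 * K2 M R0 Cphi + 2 * M * K3 M Cphi * exp (R0 / (2 * M)).

Lemma psi_cont t s : continuity_pt (psi M phi t) s.
Proof. unfold psi. apply continuity_pt_mult; auto. apply continuity_pt_const; intros x y; auto. Qed.

Lemma B_bound t : 0 <= t ->
  RInt (fun s => psi M phi t s * Rpower (hfun M p r s) (- / (p - 1))) (- (t + R0)) (t + R0)
  <= Kc * (t + R0).
Proof.
  intros Ht. set (L := t + R0).
  eapply Rle_trans.
  - apply (RInt_le _ (fun s => K2 M R0 Cphi + K3 M Cphi * L * exp ((s - t) / (2 * M)))).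
    + unfold L; lra.
    + apply ex_RInt_cont. intros s. apply continuity_pt_mult. apply psi_cont.
      apply (continuity_pt_comp (hfun M p r) (fun x => Rpower x _)). apply (h_cont M r HM Hr).
      apply Rpower_cont, (h_pos M r HM Hr).
    + apply ex_RInt_cont. intros s. apply continuity_pt_plus. apply continuity_pt_const; intros x y; auto.
      apply continuity_pt_mult. apply continuity_pt_const; intros x y; auto. apply exp_lin_cont.
    + intros s Hs. apply (pw_bound M r p R0 Cphi phi); auto; unfold L in Hs; lra.
  - rewrite (RInt_ext _ (fun s => plus ((fun _ => K2 M R0 Cphi) s) ((fun s => K3 M Cphi * L * exp ((s - t) / (2 * M))) s))) by (intros; reflexivity).
    rewrite (RInt_plus (V := R_CompleteNormedModule)).
    2:{ apply ex_RInt_cont; intros; apply continuity_pt_const; intros ? ?; auto. }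
    2:{ apply ex_RInt_cont; intros. apply continuity_pt_mult. apply continuity_pt_const; intros ? ?; auto. apply exp_lin_cont. }
    rewrite RInt_const.
    rewrite (RInt_ext _ (fun s => scal (K3 M Cphi * L) (exp ((s - t) / (2 * M))))) by (intros; reflexivity).
    rewrite (RInt_scal (V := R_CompleteNormedModule)).
    2:{ apply ex_RInt_cont; intros; apply exp_lin_cont. }
    rewrite RInt_exp_lin by (unfold L; lra).
    unfold scal, plus; simpl; unfold mult; simpl.
    assert (HK3 : 0 <= K3 M Cphi). { unfold K3. apply Rmult_le_pos; [lra|]. apply pow_le; lra. }
    assert (exp ((L - t) / (2 * M)) = exp (R0 / (2 * M))) by (unfold L; f_equal; field; lra).
    pose proof (exp_pos ((- L - t) / (2 * M))).
    assert (0 <= K3 M Cphi * L) by (apply Rmult_le_pos; unfold L; lra).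
    unfold Kc. rewrite H.
    assert (K3 M Cphi * L * (2 * M * (exp (R0 / (2 * M)) - exp ((- L - t) / (2 * M))))
      <= K3 M Cphi * L * (2 * M * exp (R0 / (2 * M)))).
    { apply Rmult_le_compat_l; auto. nra. }
    nra.
Qed.
End BInt.

Lemma Rpower_div X Y a : 0 < X -> 0 < Y -> Rpower (X / Y) a = Rpower X a / Rpower Y a.
Proof.
  intros HX HY. unfold Rdiv. rewrite <- Rpower_mult_distr; auto; [|apply Rinv_0_lt_compat; auto].
  f_equal. unfold Rpower. rewrite ln_Rinv by auto. rewrite <- exp_Ropp. f_equal; ring.
Qed.

Lemma holder_final p Fv Gp Nv K L :
  3/2 <= p <= 2 -> 0 <= Fv <= Gp -> 0 < K -> 0 < L -> 0 <= Nv ->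
  (forall mu, 0 < mu -> p * Rpower mu (p - 1) * Gp - (p - 1) * Rpower mu p * (K * L) <= Nv) ->
  / (2 * Rpower K (p - 1)) * rpow Fv p / Rpower L (p - 1) <= Nv / 2.
Proof.
  intros Hp HF HK HL HN Hmu.
  pose proof (Rpower_pos K (p - 1)) as HKp. pose proof (Rpower_pos L (p - 1)) as HLp.
  destruct (Req_dec Fv 0) as [E|E].
  - subst. rewrite rpow_nonpos by lra. unfold Rdiv. rewrite Rmult_0_r, Rmult_0_l. lra.
  - assert (HX : 0 < Gp) by lra. set (Y := K * L). assert (HY : 0 < Y) by (unfold Y; nra).
    assert (H := Hmu (Gp / Y) ltac:(apply Rdiv_lt_0_compat; auto)).
    fold Y in H. rewrite !Rpower_div in H by auto.
    assert (E1 : Rpower Gp (p - 1) * Gp = Rpower Gp p) by (rewrite Rpower_mul_self by auto; f_equal; ring).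
    assert (E2 : Rpower Y (p - 1) * Y = Rpower Y p) by (rewrite Rpower_mul_self by auto; f_equal; ring).
    pose proof (Rpower_pos Y (p - 1)).
    assert (H2 : Rpower Gp p / Rpower Y (p - 1) <= Nv).
    { eapply Rle_trans; [|exact H]. right. rewrite <- E1, <- E2. field.
      split; lra. }
    assert (HYp : Rpower Y (p - 1) = Rpower K (p - 1) * Rpower L (p - 1))
      by (unfold Y; rewrite Rpower_mult_distr; auto).
    rewrite rpow_pos_eq by lra.
    assert (Rpower Fv p <= Rpower Gp p) by (apply Rle_Rpower_l; lra).
    rewrite HYp in H2.
    apply Rle_trans with (Rpower Gp p / (Rpower K (p - 1) * Rpower L (p - 1)) / 2).
    + unfold Rdiv. rewrite Rinv_mult.
      replace (/ 2 * / Rpower K (p - 1) * Rpower Fv p * / Rpower L (p - 1)) with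
        (Rpower Fv p * (/ Rpower K (p - 1) * / Rpower L (p - 1)) * / 2) by ring.
      rewrite Rinv_mult.
      apply Rmult_le_compat_r; [lra|]. apply Rmult_le_compat_r; auto.
      apply Rlt_le, Rmult_lt_0_compat; apply Rinv_0_lt_compat; auto.
    + lra.
Qed.

Lemma tangent_weighted p X hh ps mu : 3/2 <= p <= 2 -> 0 <= X -> 0 < hh -> 0 <= ps -> 0 < mu ->
  p * Rpower mu (p - 1) * (ps * X) - (p - 1) * Rpower mu p * (ps * Rpower hh (- / (p - 1)))
  <= hh * rpow X p * ps.
Proof.
  intros Hp HX Hh Hps Hmu.
  set (q := / (p - 1)).
  set (Y := mu * Rpower hh (- q)).
  assert (HY : 0 < Y) by (unfold Y; apply Rmult_lt_0_compat; auto; apply Rpower_pos).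
  pose proof (tangent_ineq p X Y ltac:(lra) HX HY) as Ht.
  assert (E1 : hh * Rpower Y (p - 1) = Rpower mu (p - 1)).
  { unfold Y. rewrite <- Rpower_mult_distr by (auto; apply Rpower_pos).
    rewrite Rpower_mult. replace (- q * (p - 1)) with (- (1)) by (unfold q; field; lra).
    rewrite Rpower_Ropp, Rpower_1 by auto. field. lra. }
  assert (E2 : hh * Rpower Y p = Rpower mu p * Rpower hh (- q)).
  { unfold Y. rewrite <- Rpower_mult_distr by (auto; apply Rpower_pos).
    rewrite Rpower_mult. replace (- q * p) with (- q + - (1)) by (unfold q; field; lra).
    rewrite Rpower_plus, (Rpower_Ropp hh 1), Rpower_1 by auto. field. lra. }
  assert (Hmain : p * Rpower mu (p - 1) * X - (p - 1) * (Rpower mu p * Rpower hh (- q)) <= hh * rpow X p).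
  { rewrite <- E1, <- E2.
    assert (EY : Rpower Y (p - 1) * Y = Rpower Y p) by (rewrite Rpower_mul_self by auto; f_equal; ring).
    rewrite <- EY. rewrite <- EY in Ht. nra. }
  fold q. nra.
Qed.

Lemma clamp_cont a b x : continuity_pt (clamp a b) x.
Proof.
  apply eps_cont_pt. intros e He. exists e; split; auto. intros z Hz.
  eapply Rle_lt_trans; [apply clamp_lip|]; auto.
Qed.

Lemma within_interior T f x l : derivable_within (in_time T) f x l -> 0 < x < T ->
  derivable_pt_lim f x l.
Proof.
  intros H Hx e He. destruct (H e He) as [d [Hd Hy]].
  assert (Hd' : 0 < Rmin d (Rmin x (T - x))) by (repeat apply Rmin_pos; lra).
  exists (mkposreal _ Hd'). simpl. intros h Hh0 Hh.
  pose proof (Rmin_l d (Rmin x (T - x))). pose proof (Rmin_r d (Rmin x (T - x))).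
  pose proof (Rmin_l x (T - x)). pose proof (Rmin_r x (T - x)).
  apply Rabs_def2 in Hh as Hh'.
  replace h with (x + h - x) at 2 by ring.
  apply Hy. unfold in_time; lra. lra. replace (x + h - x) with h by ring. lra.
Qed.

Lemma deriv_cont_pt f x l : derivable_pt_lim f x l -> continuity_pt f x.
Proof. intros H. apply (derivable_continuous_pt _ _ (exist _ l H)). Qed.

Lemma cont_strip_pt T u t s : cont_strip T u -> in_time T t -> continuity_pt (u t) s.
Proof.
  intros H Ht. apply eps_cont_pt. intros e He. destruct (H t s Ht e He) as [d [Hd Hu]].
  exists d; split; auto. intros z Hz. apply Hu; auto. rewrite Rminus_diag, Rabs_R0; auto.
Qed.

Lemma rpow_abs_cont p x : 0 < p -> continuity_pt (fun y => rpow (Rabs y) p) x.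
Proof.
  intros Hp. apply (continuity_pt_comp Rabs (fun y => rpow y p)).
  apply Rcontinuity_abs. apply rpow_cont; auto.
Qed.

Lemma param_deriv (T : R) (F dF : R -> R -> R) t1 A x :
  (forall y s, 0 < y < T -> is_derive (fun u => F u s) y (dF y s)) ->
  (forall u s, continuity_2d_pt (fun a b => dF (clamp 0 t1 a) b) u s) ->
  (forall y s, 0 < y < T -> continuity_pt (F y) s) ->
  0 < x < t1 -> t1 < T -> 0 < A ->
  is_derive (fun y => RInt (F y) (-A) A) x (RInt (dF x) (-A) A).
Proof.
  intros Hd Hc Hcs Hx Ht1 HA.
  assert (E : RInt (fun s => Derive (fun u => F u s) x) (-A) A = RInt (dF x) (-A) A).
  { apply RInt_ext. intros s _. apply is_derive_unique, Hd. lra. }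
  rewrite <- E. apply is_derive_RInt_param.
  - apply (locally_interval _ x 0 t1); simpl; try lra.
    intros y Hy1 Hy2 s _. exists (dF y s). apply Hd. lra.
  - intros s _. apply (c2d_loc_ext (fun a b => dF (clamp 0 t1 a) b)); auto.
    exists (mkposreal _ (Rmin_pos _ _ (proj1 Hx) (ltac:(lra) : 0 < t1 - x))). simpl.
    intros u w Hu _. pose proof (Rmin_l x (t1 - x)). pose proof (Rmin_r x (t1 - x)).
    apply Rabs_def2 in Hu. rewrite clamp_id by lra. apply is_derive_unique, Hd. lra.
  - apply (locally_interval _ x 0 t1); simpl; try lra.
    intros y Hy1 Hy2. apply ex_RInt_cont. intros s. apply Hcs. lra.
Qed.

Lemma RInt_lin2 f1 f2 a b al : ex_RInt f1 a b -> ex_RInt f2 a b ->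
  RInt (fun s => al * f1 s + f2 s) a b = al * RInt f1 a b + RInt f2 a b.
Proof.
  intros H1 H2.
  rewrite (RInt_ext _ (fun s => plus (scal al (f1 s)) (f2 s))) by (intros; reflexivity).
  rewrite (RInt_plus (V := R_CompleteNormedModule)).
  rewrite (RInt_scal (V := R_CompleteNormedModule)); auto.
  apply (ex_RInt_scal (V := R_NormedModule)); auto. auto.
Qed.

Lemma RInt_lin4 f1 f2 f3 f4 a b al be : ex_RInt f1 a b -> ex_RInt f2 a b ->
  ex_RInt f3 a b -> ex_RInt f4 a b ->
  RInt (fun s => al * f1 s + f2 s + be * f3 s + f4 s) a b =
  al * RInt f1 a b + RInt f2 a b + be * RInt f3 a b + RInt f4 a b.
Proof.
  intros H1 H2 H3 H4.
  rewrite (RInt_ext _ (fun s => plus (plus (plus (scal al (f1 s)) (f2 s)) (scal be (f3 s))) (f4 s)))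
    by (intros; reflexivity).
  assert (E1 : ex_RInt (fun s => scal al (f1 s)) a b) by (apply (ex_RInt_scal (V := R_NormedModule)); auto).
  assert (E3 : ex_RInt (fun s => scal be (f3 s)) a b) by (apply (ex_RInt_scal (V := R_NormedModule)); auto).
  assert (E12 : ex_RInt (fun s => plus (scal al (f1 s)) (f2 s)) a b) by (apply (ex_RInt_plus (V := R_NormedModule)); auto).
  assert (E123 : ex_RInt (fun s => plus (plus (scal al (f1 s)) (f2 s)) (scal be (f3 s))) a b) by (apply (ex_RInt_plus (V := R_NormedModule)); auto).
  rewrite (RInt_plus (V := R_CompleteNormedModule)); auto.
  rewrite (RInt_plus (V := R_CompleteNormedModule) (fun s => plus (scal al (f1 s)) (f2 s))); auto.
  rewrite (RInt_plus (V := R_CompleteNormedModule) (fun s => scal al (f1 s))); auto.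
  rewrite !(RInt_scal (V := R_CompleteNormedModule)); auto.
Qed.

Lemma cont_pt_ext (f g : R -> R) x : (forall y, f y = g y) -> continuity_pt f x -> continuity_pt g x.
Proof. intros E H. apply (continuity_pt_locally_ext f g 1); auto; lra. Qed.

Lemma RInt_lin2' f1 f2 a b al be : ex_RInt f1 a b -> ex_RInt f2 a b ->
  RInt (fun s => al * f1 s + be * f2 s) a b = al * RInt f1 a b + be * RInt f2 a b.
Proof.
  intros H1 H2. rewrite (RInt_lin2 f1 (fun s => be * f2 s)); auto.
  rewrite (RInt_ext (fun s => be * f2 s) (fun s => scal be (f2 s))) by (intros; reflexivity).
  rewrite (RInt_scal (V := R_CompleteNormedModule)); auto.
  apply (ex_RInt_ext (fun s => scal be (f2 s))). intros; reflexivity.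
  apply (ex_RInt_scal (V := R_NormedModule)); auto.
Qed.

Section Sol.
Variables (M p R0 : R) (r : R -> R) (f g : R -> R) (phi dphi ddphi : R -> R).
Hypothesis HM : 0 < M.
Hypothesis Hp : 3/2 <= p <= 2.
Hypothesis Hr : is_RW_inverse M r.
Hypothesis HR0 : 0 < R0.
Hypothesis Hf0 : forall s, 0 <= f s.
Hypothesis Hg0 : forall s, 0 <= g s.
Hypothesis Hsupp : forall s, R0 < Rabs s -> f s = 0 /\ g s = 0.
Hypothesis Hdphi : forall s, derivable_pt_lim phi s (dphi s).
Hypothesis Hddphi : forall s, derivable_pt_lim dphi s (ddphi s).
Hypothesis Hcdd : continuity ddphi.
Hypothesis Hphipos : forall s, 0 < phi s.
Hypothesis Hode : forall s, - ddphi s + Wfun M r s * phi s + / (4 * M ^ 2) * phi s = 0.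
Variables (eps T : R) (v vt vs vtt vts vss : R -> R -> R).
Hypothesis Heps : 0 < eps.
Hypothesis HT : 0 < T.
Hypothesis Hsol : is_solution M p r R0 eps f g T v vt vs vtt vts vss.

Lemma s_der t s : in_time T t ->
     derivable_within (in_time T) (fun x => v x s) t (vt t s) /\
     derivable_pt_lim (fun y => v t y) s (vs t s) /\
     derivable_within (in_time T) (fun x => vt x s) t (vtt t s) /\
     derivable_pt_lim (fun y => vt t y) s (vts t s) /\
     derivable_pt_lim (fun y => vs t y) s (vss t s).
Proof. apply Hsol. Qed.
Lemma c_v : cont_strip T v. Proof. apply Hsol. Qed.
Lemma c_vt : cont_strip T vt. Proof. apply Hsol. Qed.
Lemma c_vs : cont_strip T vs. Proof. apply Hsol. Qed.
Lemma c_vtt : cont_strip T vtt. Proof. apply Hsol. Qed.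
Lemma c_vss : cont_strip T vss. Proof. apply Hsol. Qed.
Lemma s_eq t s : in_time T t ->
     vtt t s - vss t s + Wfun M r s * v t s = hfun M p r s * rpow (Rabs (vt t s)) p.
Proof. apply Hsol. Qed.
Lemma s_init s : v 0 s = eps * f s /\ vt 0 s = eps * g s.
Proof. apply Hsol. Qed.
Lemma s_supp t s : in_time T t -> t + R0 < Rabs s -> v t s = 0.
Proof. apply Hsol. Qed.

Lemma phi_cont s : continuity_pt phi s.
Proof. apply (deriv_cont_pt _ _ _ (Hdphi s)). Qed.
Lemma dphi_cont s : continuity_pt dphi s.
Proof. apply (deriv_cont_pt _ _ _ (Hddphi s)). Qed.

Lemma vt_zero t s : in_time T t -> t + R0 < Rabs s -> vt t s = 0.
Proof.
  intros Ht Hs. destruct (Req_dec (vt t s) 0) as [E|E]; auto. exfalso.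
  destruct (s_der t s Ht) as [H _].
  assert (Hl : 0 < Rabs (vt t s)) by (apply Rabs_pos_lt; auto).
  destruct (H _ Hl) as [d [Hd Hy]].
  set (y := t + Rmin d (Rmin (T - t) (Rabs s - t - R0)) / 2).
  unfold in_time in Ht.
  assert (Hm : 0 < Rmin d (Rmin (T - t) (Rabs s - t - R0))) by (repeat apply Rmin_pos; lra).
  pose proof (Rmin_l d (Rmin (T - t) (Rabs s - t - R0))). pose proof (Rmin_r d (Rmin (T - t) (Rabs s - t - R0))).
  pose proof (Rmin_l (T - t) (Rabs s - t - R0)). pose proof (Rmin_r (T - t) (Rabs s - t - R0)).
  assert (Hin : in_time T y) by (unfold in_time, y; lra).
  assert (Hy1 := Hy y Hin ltac:(unfold y; lra) ltac:(unfold y; rewrite Rabs_right; lra)).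
  rewrite (s_supp y s Hin) in Hy1 by (unfold y; lra).
  rewrite (s_supp t s) in Hy1 by (unfold in_time; lra).
  replace ((0 - 0) / (y - t) - vt t s) with (- vt t s) in Hy1 by (field; unfold y; lra).
  rewrite Rabs_Ropp in Hy1. lra.
Qed.

Lemma vs_zero t s : in_time T t -> t + R0 < Rabs s -> vs t s = 0.
Proof.
  intros Ht Hs. destruct (Req_dec (vs t s) 0) as [E|E]; auto. exfalso.
  destruct (s_der t s Ht) as [_ [H _]].
  assert (Hl : 0 < Rabs (vs t s)) by (apply Rabs_pos_lt; auto).
  destruct (H _ Hl) as [d Hy].
  set (h := Rmin d (Rabs s - t - R0) / 2).
  pose proof (cond_pos d).
  assert (Hm : 0 < Rmin d (Rabs s - t - R0)) by (apply Rmin_pos; lra).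
  pose proof (Rmin_l d (Rabs s - t - R0)). pose proof (Rmin_r d (Rabs s - t - R0)).
  assert (Hy1 := Hy h ltac:(unfold h; lra) ltac:(unfold h; rewrite Rabs_right; lra)).
  assert (Hh1 : 0 < h < Rabs s - t - R0) by (unfold h; lra). unfold in_time in Ht.
  assert (t + R0 < Rabs (s + h)).
  { destruct (Rle_dec 0 s).
    - rewrite Rabs_right in * by lra. lra.
    - rewrite (Rabs_left s) in Hh1 by lra. rewrite Rabs_left by lra. lra. }
  rewrite (s_supp t (s + h)) in Hy1 by auto.
  rewrite (s_supp t s) in Hy1 by auto.
  replace ((0 - 0) / h - vs t s) with (- vs t s) in Hy1 by (field; unfold h; lra).
  rewrite Rabs_Ropp in Hy1. lra.
Qed.


Definition kk := / (2 * M).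
Definition gI tau s := psi M phi tau s * vt tau s.
Definition hI tau s := psi M phi tau s * v tau s.
Definition nI tau s := hfun M p r s * rpow (Rabs (vt tau s)) p * psi M phi tau s.
Definition dgI tau s := - kk * gI tau s + psi M phi tau s * vtt tau s.
Definition dhI tau s := - kk * hI tau s + gI tau s.

Lemma cc t1 : continuity_pt (fun a => exp (- clamp 0 t1 a / (2 * M))) 0 -> True.
Proof. auto. Qed.

Lemma expc_cont t1 u : continuity_pt (fun a => exp (- clamp 0 t1 a / (2 * M))) u.
Proof.
  apply (continuity_pt_comp (clamp 0 t1) (fun a => exp (- a / (2 * M)))). apply clamp_cont.
  apply (continuity_pt_comp (fun a => - a / (2 * M)) exp).
  - unfold Rdiv. apply continuity_pt_mult. apply continuity_pt_opp.
    apply derivable_continuous_pt, derivable_pt_id. apply continuity_pt_const; intros ? ?; auto.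
  - apply derivable_continuous_pt, derivable_pt_exp.
Qed.

Lemma psi_c2 t1 u s : continuity_2d_pt (fun a b => psi M phi (clamp 0 t1 a) b) u s.
Proof.
  unfold psi. apply continuity_2d_pt_mult.
  apply (c2d_fst (fun a => exp (- clamp 0 t1 a / (2 * M)))), expc_cont.
  apply c2d_snd, phi_cont.
Qed.

Lemma cst_c2 (c : R) u s : continuity_2d_pt (fun _ _ => c) u s.
Proof. apply continuity_2d_pt_const. Qed.

Section T1.
Variable t1 : R.
Hypothesis Ht1 : 0 <= t1 < T.

Lemma gI_c2 u s : continuity_2d_pt (fun a b => gI (clamp 0 t1 a) b) u s.
Proof. unfold gI. apply continuity_2d_pt_mult. apply psi_c2. apply (cont_strip_c2d T vt t1 c_vt Ht1). Qed.
Lemma hI_c2 u s : continuity_2d_pt (fun a b => hI (clamp 0 t1 a) b) u s.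
Proof. unfold hI. apply continuity_2d_pt_mult. apply psi_c2. apply (cont_strip_c2d T v t1 c_v Ht1). Qed.
Lemma nI_c2 u s : continuity_2d_pt (fun a b => nI (clamp 0 t1 a) b) u s.
Proof.
  unfold nI. apply continuity_2d_pt_mult; [apply continuity_2d_pt_mult|].
  - apply c2d_snd, (h_cont M r HM Hr).
  - apply (c2d_comp (fun y => rpow (Rabs y) p) (fun a b => vt (clamp 0 t1 a) b)).
    apply rpow_abs_cont; lra. apply (cont_strip_c2d T vt t1 c_vt Ht1).
  - apply psi_c2.
Qed.
Lemma dgI_c2 u s : continuity_2d_pt (fun a b => dgI (clamp 0 t1 a) b) u s.
Proof.
  unfold dgI. apply continuity_2d_pt_plus. apply continuity_2d_pt_mult. apply cst_c2. apply gI_c2.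
  apply continuity_2d_pt_mult. apply psi_c2. apply (cont_strip_c2d T vtt t1 c_vtt Ht1).
Qed.
Lemma dhI_c2 u s : continuity_2d_pt (fun a b => dhI (clamp 0 t1 a) b) u s.
Proof.
  unfold dhI. apply continuity_2d_pt_plus. apply continuity_2d_pt_mult. apply cst_c2. apply hI_c2.
  apply gI_c2.
Qed.
End T1.

Lemma psi_der tau s : is_derive (fun u => psi M phi u s) tau (- kk * psi M phi tau s).
Proof.
  apply is_derive_Reals. unfold psi, kk.
  replace (- / (2 * M) * (exp (- tau / (2 * M)) * phi s)) with
    ((exp (- tau / (2 * M)) * (- 1 * / (2 * M))) * phi s) by ring.
  apply derivable_pt_lim_scal_right.
  apply (derivable_pt_lim_comp (fun u => - u / (2 * M)) exp).
  - unfold Rdiv. apply derivable_pt_lim_scal_right. apply derivable_pt_lim_opp, derivable_pt_lim_id.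
  - apply derivable_pt_lim_exp.
Qed.

Lemma gI_der y s : 0 < y < T -> is_derive (fun u => gI u s) y (dgI y s).
Proof.
  intros Hy. unfold dgI, gI.
  assert (Hv : is_derive (fun u => vt u s) y (vtt y s)).
  { apply is_derive_Reals. eapply within_interior; [|exact Hy]. apply s_der. unfold in_time; lra. }
  apply is_derive_Reals. apply is_derive_Reals in Hv.
  replace (- kk * (psi M phi y s * vt y s) + psi M phi y s * vtt y s) with
    ((- kk * psi M phi y s) * (vt y s) + (psi M phi y s) * (vtt y s)) by ring.
  apply (derivable_pt_lim_mult (fun u => psi M phi u s) (fun u => vt u s)); auto.
  apply is_derive_Reals, psi_der.
Qed.

Lemma hI_der y s : 0 < y < T -> is_derive (fun u => hI u s) y (dhI y s).
Proof.
  intros Hy. unfold dhI, hI, gI.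
  assert (Hv : is_derive (fun u => v u s) y (vt y s)).
  { apply is_derive_Reals. eapply within_interior; [|exact Hy]. apply s_der. unfold in_time; lra. }
  apply is_derive_Reals. apply is_derive_Reals in Hv.
  replace (- kk * (psi M phi y s * v y s) + psi M phi y s * vt y s) with
    ((- kk * psi M phi y s) * (v y s) + (psi M phi y s) * (vt y s)) by ring.
  apply (derivable_pt_lim_mult (fun u => psi M phi u s) (fun u => v u s)); auto.
  apply is_derive_Reals, psi_der.
Qed.

Lemma gI_cs x s : in_time T x -> continuity_pt (gI x) s.
Proof. intros H. unfold gI. apply continuity_pt_mult. apply psi_cont, phi_cont. apply (cont_strip_pt T vt x s c_vt H). Qed.
Lemma hI_cs x s : in_time T x -> continuity_pt (hI x) s.
Proof. intros H. unfold hI. apply continuity_pt_mult. apply psi_cont, phi_cont. apply (cont_strip_pt T v x s c_v H). Qed.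
Lemma nI_cs x s : in_time T x -> continuity_pt (nI x) s.
Proof.
  intros H. unfold nI. apply continuity_pt_mult; [apply continuity_pt_mult|].
  apply (h_cont M r HM Hr).
  apply (continuity_pt_comp (vt x) (fun y => rpow (Rabs y) p)). apply (cont_strip_pt T vt x s c_vt H).
  apply rpow_abs_cont; lra.
  apply psi_cont, phi_cont.
Qed.

Definition ibpI x s := psi M phi x s * vss x s - exp (- x / (2 * M)) * ddphi s * v x s.

Lemma ibpI_cs x s : in_time T x -> continuity_pt (ibpI x) s.
Proof.
  intros H. unfold ibpI. apply continuity_pt_minus.
  apply continuity_pt_mult. apply psi_cont, phi_cont. apply (cont_strip_pt T vss x s c_vss H).
  apply continuity_pt_mult. apply continuity_pt_mult. apply continuity_pt_const; intros ? ?; auto.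
  apply Hcdd. apply (cont_strip_pt T v x s c_v H).
Qed.

Lemma IBP x A : in_time T x -> x + R0 < A -> RInt (ibpI x) (-A) A = 0.
Proof.
  intros Hx HA. apply is_RInt_unique.
  set (e := exp (- x / (2 * M))).
  set (Fb := fun s => e * (phi s * vs x s - dphi s * v x s)).
  assert (H0 : minus (Fb A) (Fb (-A)) = 0).
  { unfold in_time in Hx.
    assert (Ha1 : x + R0 < Rabs A) by (rewrite Rabs_right; lra).
    assert (Ha2 : x + R0 < Rabs (-A)) by (rewrite Rabs_Ropp, Rabs_right; lra).
    unfold Fb. rewrite (vs_zero x A), (s_supp x A), (vs_zero x (-A)), (s_supp x (-A)); auto.
    unfold minus, plus, opp; simpl; ring. }
  rewrite <- H0. apply (is_RInt_derive (V := R_CompleteNormedModule)).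
  - intros s _. apply is_derive_Reals.
    destruct (s_der x s Hx) as [_ [Hvs [_ [_ Hvss]]]].
    unfold Fb, ibpI, psi. fold e.
    replace (e * phi s * vss x s - e * ddphi s * v x s) with
      (e * ((dphi s * vs x s + phi s * vss x s) - (ddphi s * v x s + dphi s * vs x s))) by ring.
    apply derivable_pt_lim_scal.
    apply derivable_pt_lim_minus.
    + apply (derivable_pt_lim_mult phi (fun y => vs x y)); auto.
    + apply (derivable_pt_lim_mult dphi (fun y => v x y)); auto.
  - intros s _. apply cont_conv, ibpI_cs; auto.
Qed.

Lemma kk_sq : kk * kk = / (4 * M ^ 2).
Proof. unfold kk. field. lra. Qed.

Lemma dgI_split x s : in_time T x ->
  dgI x s = - kk * gI x s + ibpI x s + (kk * kk) * hI x s + nI x s.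
Proof.
  intros Hx. rewrite kk_sq.
  assert (Hd : ddphi s = Wfun M r s * phi s + / (4 * M ^ 2) * phi s) by (pose proof (Hode s); lra).
  assert (Hv : vtt x s = vss x s - Wfun M r s * v x s + hfun M p r s * rpow (Rabs (vt x s)) p)
    by (pose proof (s_eq x s Hx); lra).
  unfold dgI, ibpI, gI, hI, nI, psi. rewrite Hv, Hd. ring.
Qed.

Lemma RInt_dgI x A : in_time T x -> x + R0 < A ->
  RInt (dgI x) (-A) A = - kk * RInt (gI x) (-A) A + (kk * kk) * RInt (hI x) (-A) A + RInt (nI x) (-A) A.
Proof.
  intros Hx HA.
  rewrite (RInt_ext _ (fun s => - kk * gI x s + ibpI x s + (kk * kk) * hI x s + nI x s))
    by (intros; apply dgI_split; auto).
  rewrite RInt_lin4. 2-5: apply ex_RInt_cont; intros. 2: apply gI_cs; auto.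
  2: apply ibpI_cs; auto. 2: apply hI_cs; auto. 2: apply nI_cs; auto.
  rewrite IBP; auto. rewrite Rplus_0_r. reflexivity.
Qed.

Lemma RInt_dhI x A : in_time T x ->
  RInt (dhI x) (-A) A = - kk * RInt (hI x) (-A) A + RInt (gI x) (-A) A.
Proof.
  intros Hx. unfold dhI. apply RInt_lin2; apply ex_RInt_cont; intros; auto using gI_cs, hI_cs.
Qed.

Definition AA t1 := t1 + R0 + 1.
Definition Gi t1 tau := RInt (gI tau) (- AA t1) (AA t1).
Definition Hi t1 tau := RInt (hI tau) (- AA t1) (AA t1).
Definition Ni t1 tau := RInt (nI tau) (- AA t1) (AA t1).

Lemma Gi_der t1 x : 0 <= t1 < T -> 0 < x < t1 ->
  is_derive (Gi t1) x (- kk * Gi t1 x + (kk * kk) * Hi t1 x + Ni t1 x).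
Proof.
  intros Ht1 Hx. unfold Gi, Hi, Ni. rewrite <- RInt_dgI.
  2: unfold in_time; lra.  2: unfold AA; lra.
  apply (param_deriv T gI dgI t1); auto.
  - intros; apply gI_der; auto.
  - intros; apply dgI_c2; auto.
  - intros; apply gI_cs; unfold in_time; lra.
  - lra.
  - unfold AA; lra.
Qed.

Lemma Hi_der t1 x : 0 <= t1 < T -> 0 < x < t1 ->
  is_derive (Hi t1) x (- kk * Hi t1 x + Gi t1 x).
Proof.
  intros Ht1 Hx. unfold Gi, Hi. rewrite <- RInt_dhI.
  2: unfold in_time; lra.
  apply (param_deriv T hI dhI t1); auto.
  - intros; apply hI_der; auto.
  - intros; apply dhI_c2; auto.
  - intros; apply hI_cs; unfold in_time; lra.
  - lra.
  - unfold AA; lra.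
Qed.

Lemma gI_zero x s : in_time T x -> x + R0 < Rabs s -> gI x s = 0.
Proof. intros; unfold gI; rewrite vt_zero; auto; ring. Qed.
Lemma hI_zero x s : in_time T x -> x + R0 < Rabs s -> hI x s = 0.
Proof. intros; unfold hI; rewrite s_supp; auto; ring. Qed.
Lemma nI_zero x s : in_time T x -> x + R0 < Rabs s -> nI x s = 0.
Proof. intros; unfold nI; rewrite vt_zero, Rabs_R0, rpow_nonpos; auto; try lra; ring. Qed.

Lemma nI_ge0 x s : 0 <= nI x s.
Proof.
  unfold nI, psi. apply Rmult_le_pos. apply Rmult_le_pos.
  apply Rlt_le, (h_pos M r HM Hr). apply rpow_ge0.
  apply Rmult_le_pos. apply Rlt_le, exp_pos. apply Rlt_le, Hphipos.
Qed.

Section Fix.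
Variable t1 : R.
Hypothesis Ht1 : 0 <= t1 < T.

Lemma AA_pos : 0 < AA t1.
Proof. unfold AA; lra. Qed.

Lemma Nc_cont u : continuity_pt (fun u => Ni t1 (clamp 0 t1 u)) u.
Proof. apply (param_cont (fun a b => nI (clamp 0 t1 a) b)). intros; apply nI_c2; auto. pose proof AA_pos; lra. Qed.
Lemma Gc_cont u : continuity_pt (fun u => Gi t1 (clamp 0 t1 u)) u.
Proof. apply (param_cont (fun a b => gI (clamp 0 t1 a) b)). intros; apply gI_c2; auto. pose proof AA_pos; lra. Qed.
Lemma Hc_cont u : continuity_pt (fun u => Hi t1 (clamp 0 t1 u)) u.
Proof. apply (param_cont (fun a b => hI (clamp 0 t1 a) b)). intros; apply hI_c2; auto. pose proof AA_pos; lra. Qed.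

Definition Nc u := Ni t1 (clamp 0 t1 u).
Definition Ic u := RInt Nc 0 u.

Lemma Ic_der x : is_derive Ic x (Nc x).
Proof.
  apply (is_derive_RInt (V := R_CompleteNormedModule) Nc Ic 0 x).
  - exists (mkposreal 1 Rlt_0_1). intros y _. apply (RInt_correct (V := R_CompleteNormedModule)).
    apply ex_RInt_cont, Nc_cont.
  - apply cont_conv, Nc_cont.
Qed.

Lemma Ic_cont x : continuity_pt Ic x.
Proof. apply (deriv_cont_pt _ _ (Nc x)). apply is_derive_Reals, Ic_der. Qed.

Lemma clamp_time u : in_time T (clamp 0 t1 u).
Proof. pose proof (clamp_in 0 t1 u). unfold in_time; lra. Qed.

Lemma Nc_ge0 u : 0 <= Nc u.
Proof.
  unfold Nc, Ni. apply RInt_ge_0. pose proof AA_pos; lra.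
  apply ex_RInt_cont. intros; apply nI_cs, clamp_time.
  intros; apply nI_ge0.
Qed.
Lemma Ic0 : Ic 0 = 0.
Proof. unfold Ic. rewrite RInt_point. reflexivity. Qed.

Lemma P_const t : 0 <= t < t1 -> Gi t1 t + kk * Hi t1 t - Ic t = Gi t1 0 + kk * Hi t1 0.
Proof.
  intros Ht.
  set (P := fun u => Gi t1 (clamp 0 t1 u) + kk * Hi t1 (clamp 0 t1 u) - Ic u).
  destruct (MVT_gen P 0 t (fun _ => 0)) as [c [_ Hc]].
  - intros x Hx. cbv zeta in Hx. rewrite Rmin_left, Rmax_right in Hx by lra.
    apply (is_derive_ext_loc (fun u => Gi t1 u + kk * Hi t1 u - Ic u)).
    + apply (locally_interval _ x 0 t1); simpl; try lra. intros y Hy1 Hy2. unfold P.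
      rewrite !clamp_id by lra. reflexivity.
    + apply is_derive_Reals.
      replace 0 with (((- kk * Gi t1 x + (kk * kk) * Hi t1 x + Ni t1 x) + kk * (- kk * Hi t1 x + Gi t1 x)) - Nc x).
      2:{ unfold Nc. rewrite clamp_id by lra. ring. }
      apply (derivable_pt_lim_minus (fun u => Gi t1 u + kk * Hi t1 u) Ic).
      apply (derivable_pt_lim_plus (Gi t1) (fun u => kk * Hi t1 u)).
      apply is_derive_Reals, Gi_der; auto; lra.
      apply (derivable_pt_lim_scal (Hi t1)). apply is_derive_Reals, Hi_der; auto; lra.
      apply is_derive_Reals, Ic_der.
  - intros x Hx. unfold P.
    apply (continuity_pt_minus (fun u => Gi t1 (clamp 0 t1 u) + kk * Hi t1 (clamp 0 t1 u)) Ic).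
    apply (continuity_pt_plus (fun u => Gi t1 (clamp 0 t1 u)) (fun u => kk * Hi t1 (clamp 0 t1 u))).
    apply Gc_cont. apply (continuity_pt_scal (fun u => Hi t1 (clamp 0 t1 u))). apply Hc_cont.
    apply Ic_cont.
  - unfold P in Hc. rewrite (clamp_id 0 t1 t), (clamp_id 0 t1 0) in Hc by lra.
    rewrite Ic0 in Hc. lra.
Qed.

Lemma Q_mono t : 0 <= t < t1 ->
  Gi t1 0 - kk * Hi t1 0 <= exp (2 * kk * t) * (Gi t1 t - kk * Hi t1 t).
Proof.
  intros Ht.
  set (Q := fun u => exp (2 * kk * u) * (Gi t1 (clamp 0 t1 u) - kk * Hi t1 (clamp 0 t1 u))).
  destruct (MVT_gen Q 0 t (fun u => exp (2 * kk * u) * Nc u)) as [c [_ Hc]].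
  - intros x Hx. cbv zeta in Hx. rewrite Rmin_left, Rmax_right in Hx by lra.
    apply (is_derive_ext_loc (fun u => exp (2 * kk * u) * (Gi t1 u - kk * Hi t1 u))).
    + apply (locally_interval _ x 0 t1); simpl; try lra. intros y Hy1 Hy2. unfold Q.
      rewrite !clamp_id by lra. reflexivity.
    + apply is_derive_Reals.
      replace (exp (2 * kk * x) * Nc x) with
        ((exp (2 * kk * x) * (2 * kk * 1)) * (Gi t1 x - kk * Hi t1 x) +
         exp (2 * kk * x) * ((- kk * Gi t1 x + (kk * kk) * Hi t1 x + Ni t1 x) - kk * (- kk * Hi t1 x + Gi t1 x))).
      2:{ unfold Nc. rewrite clamp_id by lra. ring. }
      apply (derivable_pt_lim_mult (fun u => exp (2 * kk * u)) (fun u => Gi t1 u - kk * Hi t1 u)).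
      * apply (derivable_pt_lim_comp (fun u => 2 * kk * u) exp).
        apply (derivable_pt_lim_scal id). apply derivable_pt_lim_id. apply derivable_pt_lim_exp.
      * apply (derivable_pt_lim_minus (Gi t1) (fun u => kk * Hi t1 u)).
        apply is_derive_Reals, Gi_der; auto; lra.
        apply (derivable_pt_lim_scal (Hi t1)). apply is_derive_Reals, Hi_der; auto; lra.
  - intros x Hx. unfold Q.
    apply (continuity_pt_mult (fun u => exp (2 * kk * u)) (fun u => Gi t1 (clamp 0 t1 u) - kk * Hi t1 (clamp 0 t1 u))).
    apply (continuity_pt_comp (fun u => 2 * kk * u) exp).
    apply (continuity_pt_scal id). apply derivable_continuous_pt, derivable_pt_id.
    apply derivable_continuous_pt, derivable_pt_exp.
    apply (continuity_pt_minus (fun u => Gi t1 (clamp 0 t1 u)) (fun u => kk * Hi t1 (clamp 0 t1 u))).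
    apply Gc_cont. apply (continuity_pt_scal (fun u => Hi t1 (clamp 0 t1 u))). apply Hc_cont.
  - unfold Q in Hc. rewrite (clamp_id 0 t1 t), (clamp_id 0 t1 0) in Hc by lra.
    rewrite Rmult_0_r, exp_0, Rmult_1_l in Hc.
    pose proof (Nc_ge0 c). pose proof (exp_pos (2 * kk * c)).
    assert (0 <= exp (2 * kk * c) * Nc c * (t - 0)) by (apply Rmult_le_pos; [apply Rmult_le_pos|]; lra).
    lra.
Qed.

Lemma t0_time : in_time T 0.
Proof. unfold in_time; lra. Qed.

Lemma phig_cont s : continuity_pt (fun s => phi s * g s) s.
Proof.
  apply (cont_pt_ext (fun s => / eps * (phi s * vt 0 s))).
  - intros y. rewrite (proj2 (s_init y)). field. lra.
  - apply continuity_pt_mult. apply continuity_pt_const; intros ? ?; auto.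
    apply continuity_pt_mult. apply phi_cont. apply (cont_strip_pt T vt 0 s c_vt t0_time).
Qed.

Lemma phif_cont s : continuity_pt (fun s => phi s * f s) s.
Proof.
  apply (cont_pt_ext (fun s => / eps * (phi s * v 0 s))).
  - intros y. rewrite (proj1 (s_init y)). field. lra.
  - apply continuity_pt_mult. apply continuity_pt_const; intros ? ?; auto.
    apply continuity_pt_mult. apply phi_cont. apply (cont_strip_pt T v 0 s c_v t0_time).
Qed.

Definition Phg := RInt (fun s => phi s * g s) (- AA t1) (AA t1).
Definition Phf := RInt (fun s => phi s * f s) (- AA t1) (AA t1).

Lemma Phg_ge0 : 0 <= Phg.
Proof.
  unfold Phg. apply RInt_ge_0. pose proof AA_pos; lra. apply ex_RInt_cont, phig_cont.
  intros x _. apply Rmult_le_pos; auto. apply Rlt_le, Hphipos.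
Qed.
Lemma Phf_ge0 : 0 <= Phf.
Proof.
  unfold Phf. apply RInt_ge_0. pose proof AA_pos; lra. apply ex_RInt_cont, phif_cont.
  intros x _. apply Rmult_le_pos; auto. apply Rlt_le, Hphipos.
Qed.

Lemma RintR_phig : RintR (fun s => phi s * g s) = Phg.
Proof.
  rewrite (RintR_eq _ R0). 2: apply phig_cont.
  2:{ intros x Hx. rewrite (proj2 (Hsupp x Hx)). ring. } 2: lra.
  unfold Phg. symmetry. apply RInt_shrink. apply phig_cont.
  intros x Hx. rewrite (proj2 (Hsupp x Hx)). ring. unfold AA; lra.
Qed.

Lemma psi0 s : psi M phi 0 s = phi s.
Proof. unfold psi. replace (- 0 / (2 * M)) with 0 by (field; lra). rewrite exp_0. ring. Qed.

Lemma Gi0 : Gi t1 0 = eps * Phg.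
Proof.
  unfold Gi, Phg. rewrite (RInt_ext _ (fun s => scal eps (phi s * g s))).
  apply (RInt_scal (V := R_CompleteNormedModule)). apply ex_RInt_cont, phig_cont.
  intros x _. unfold gI. rewrite psi0, (proj2 (s_init x)). unfold scal; simpl; unfold mult; simpl. ring.
Qed.

Lemma Hi0 : Hi t1 0 = eps * Phf.
Proof.
  unfold Hi, Phf. rewrite (RInt_ext _ (fun s => scal eps (phi s * f s))).
  apply (RInt_scal (V := R_CompleteNormedModule)). apply ex_RInt_cont, phif_cont.
  intros x _. unfold hI. rewrite psi0, (proj1 (s_init x)). unfold scal; simpl; unfold mult; simpl. ring.
Qed.

Lemma RintR_nI tau : 0 <= tau <= t1 -> RintR (nI tau) = Ni t1 tau.
Proof.
  intros Htau. assert (Ht : in_time T tau) by (unfold in_time; lra).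
  rewrite (RintR_eq _ (tau + R0)); try lra.
  - unfold Ni. symmetry. apply RInt_shrink. intros; apply nI_cs; auto.
    intros; apply nI_zero; auto. unfold AA; lra.
  - intros; apply nI_cs; auto.
  - intros; apply nI_zero; auto.
Qed.

Lemma RintR_gI tau : 0 <= tau <= t1 -> RintR (gI tau) = Gi t1 tau.
Proof.
  intros Htau. assert (Ht : in_time T tau) by (unfold in_time; lra).
  rewrite (RintR_eq _ (tau + R0)); try lra.
  - unfold Gi. symmetry. apply RInt_shrink. intros; apply gI_cs; auto.
    intros; apply gI_zero; auto. unfold AA; lra.
  - intros; apply gI_cs; auto.
  - intros; apply gI_zero; auto.
Qed.

Lemma Rint_N y : 0 <= y <= t1 -> Rint (fun tau => RintR (nI tau)) 0 y = Ic y.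
Proof.
  intros Hy.
  assert (E : forall x, Rmin 0 y < x < Rmax 0 y -> Nc x = RintR (nI x)).
  { intros x Hx. rewrite Rmin_left, Rmax_right in Hx by lra. unfold Nc.
    rewrite clamp_id by lra. rewrite RintR_nI; auto; lra. }
  rewrite Rint_RInt.
  - unfold Ic. symmetry. apply RInt_ext. auto.
  - apply (ex_RInt_ext Nc); auto. apply ex_RInt_cont, Nc_cont.
Qed.

Lemma Fcal_eq t : 0 <= t <= t1 -> Fcal M p r phi g eps vt t = / 2 * Ic t + eps / 2 * Phg.
Proof.
  intros Ht. unfold Fcal.
  change (fun tau => RintR (fun s => hfun M p r s * rpow (Rabs (vt tau s)) p * psi M phi tau s))
    with (fun tau => RintR (nI tau)).
  rewrite Rint_N, RintR_phig; auto.
Qed.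

Lemma Ic_ge0 t : 0 <= t -> 0 <= Ic t.
Proof. intros Ht. unfold Ic. apply RInt_ge_0; auto. apply ex_RInt_cont, Nc_cont. intros; apply Nc_ge0. Qed.

Lemma F_le_G t : 0 <= t < t1 ->
  0 <= Fcal M p r phi g eps vt t /\ Fcal M p r phi g eps vt t <= Gi t1 t.
Proof.
  intros Ht. rewrite Fcal_eq by lra.
  pose proof (P_const t Ht) as HP. pose proof (Q_mono t Ht) as HQ.
  rewrite Gi0, Hi0 in HP, HQ.
  pose proof Phg_ge0. pose proof Phf_ge0. pose proof (Ic_ge0 t (proj1 Ht)).
  assert (Hkk : 0 < kk) by (unfold kk; apply Rinv_0_lt_compat; lra).
  set (E := exp (2 * kk * t)) in *.
  assert (HE : 1 <= E).
  { unfold E. rewrite <- exp_0. destruct (Req_dec t 0) as [h|h].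
    - rewrite h, Rmult_0_r; lra.
    - apply Rlt_le, exp_increasing. apply Rmult_lt_0_compat; [lra|]. lra. }
  split. { assert (0 <= eps * Phg) by (apply Rmult_le_pos; lra). lra. }
  set (X := Gi t1 t - kk * Hi t1 t) in *.
  assert (HH1 : 0 <= E * (kk * (eps * Phf) + X)).
  { assert (0 <= kk * (eps * Phf) * (E - 1)).
    { apply Rmult_le_pos; [|lra]. apply Rmult_le_pos; [lra|]. apply Rmult_le_pos; lra. }
    assert (0 <= eps * Phg) by (apply Rmult_le_pos; lra). nra. }
  assert (HH2 : 0 <= kk * (eps * Phf) + X).
  { destruct (Rle_dec 0 (kk * (eps * Phf) + X)); auto. nra. }
  unfold X in HH2. lra.
Qed.

Lemma F_der t : 0 <= t < t1 ->
  derivable_within (in_time T) (Fcal M p r phi g eps vt) t (/ 2 * Nc t).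
Proof.
  intros Ht e He.
  assert (Hd := proj1 (is_derive_Reals _ _ _) (Ic_der t)).
  destruct (Hd (2 * e) ltac:(lra)) as [d Hdd].
  exists (Rmin d (t1 - t)). split. { apply Rmin_pos; [apply cond_pos|lra]. }
  intros y Hy Hyt Hyd. pose proof (Rmin_l d (t1 - t)). pose proof (Rmin_r d (t1 - t)).
  unfold in_time in Hy. apply Rabs_def2 in Hyd as Hyd'.
  rewrite !Fcal_eq by lra.
  assert (Hq := Hdd (y - t) ltac:(lra) ltac:(lra)).
  replace (t + (y - t)) with y in Hq by ring.
  replace ((/ 2 * Ic y + eps / 2 * Phg - (/ 2 * Ic t + eps / 2 * Phg)) / (y - t) - / 2 * Nc t)
    with (/ 2 * ((Ic y - Ic t) / (y - t) - Nc t)) by (field; lra).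
  rewrite Rabs_mult, Rabs_right by lra. lra.
Qed.

Definition Gp t := RInt (fun s => psi M phi t s * Rabs (vt t s)) (- (t + R0)) (t + R0).
Definition Bt t := RInt (fun s => psi M phi t s * Rpower (hfun M p r s) (- / (p - 1))) (- (t + R0)) (t + R0).

Lemma Nc_eq t : 0 <= t < t1 -> Nc t = RInt (nI t) (- (t + R0)) (t + R0).
Proof.
  intros Ht. assert (Hti : in_time T t) by (unfold in_time; lra).
  unfold Nc. rewrite clamp_id by lra. unfold Ni. apply RInt_shrink.
  intros; apply nI_cs; auto. intros; apply nI_zero; auto. unfold AA; lra.
Qed.

Lemma Gi_eq t : 0 <= t < t1 -> Gi t1 t = RInt (gI t) (- (t + R0)) (t + R0).
Proof.
  intros Ht. assert (Hti : in_time T t) by (unfold in_time; lra).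
  unfold Gi. apply RInt_shrink.
  intros; apply gI_cs; auto. intros; apply gI_zero; auto. unfold AA; lra.
Qed.

Lemma psiabs_cs t s : in_time T t -> continuity_pt (fun s => psi M phi t s * Rabs (vt t s)) s.
Proof.
  intros H. apply continuity_pt_mult. apply psi_cont, phi_cont.
  apply (continuity_pt_comp (vt t) Rabs). apply (cont_strip_pt T vt t s c_vt H). apply Rcontinuity_abs.
Qed.

Lemma psih_cs t s : continuity_pt (fun s => psi M phi t s * Rpower (hfun M p r s) (- / (p - 1))) s.
Proof.
  apply continuity_pt_mult. apply psi_cont, phi_cont.
  apply (continuity_pt_comp (hfun M p r) (fun x => Rpower x _)). apply (h_cont M r HM Hr).
  apply Rpower_cont, (h_pos M r HM Hr).
Qed.

Lemma N_lower t mu : 0 <= t < t1 -> 0 < mu ->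
  p * Rpower mu (p - 1) * Gp t - (p - 1) * Rpower mu p * Bt t <= Nc t.
Proof.
  intros Ht Hmu. assert (Hti : in_time T t) by (unfold in_time; lra).
  rewrite Nc_eq by auto. unfold Gp, Bt.
  pose (a := p * Rpower mu (p - 1)). pose (b := - ((p - 1) * Rpower mu p)).
  assert (E := RInt_lin2' (fun s => psi M phi t s * Rabs (vt t s))
     (fun s => psi M phi t s * Rpower (hfun M p r s) (- / (p - 1))) (- (t + R0)) (t + R0) a b).
  specialize (E ltac:(apply ex_RInt_cont; intros; apply psiabs_cs; auto) ltac:(apply ex_RInt_cont; intros; apply psih_cs)).
  replace (a * RInt (fun s => psi M phi t s * Rabs (vt t s)) (- (t + R0)) (t + R0) +
    b * RInt (fun s => psi M phi t s * Rpower (hfun M p r s) (- / (p - 1))) (- (t + R0)) (t + R0))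
    with (p * Rpower mu (p - 1) * RInt (fun s => psi M phi t s * Rabs (vt t s)) (- (t + R0)) (t + R0) -
   (p - 1) * Rpower mu p * RInt (fun s => psi M phi t s * Rpower (hfun M p r s) (- / (p - 1))) (- (t + R0)) (t + R0)) in E by (unfold a, b; ring).
  rewrite <- E.
  apply RInt_le. lra.
  - apply ex_RInt_cont. intros. apply continuity_pt_plus.
    apply continuity_pt_mult. apply continuity_pt_const; intros ? ?; auto. apply psiabs_cs; auto.
    apply continuity_pt_mult. apply continuity_pt_const; intros ? ?; auto. apply psih_cs.
  - apply ex_RInt_cont. intros; apply nI_cs; auto.
  - intros s _. unfold nI.
    pose proof (tangent_weighted p (Rabs (vt t s)) (hfun M p r s) (psi M phi t s) mu Hp (Rabs_pos _)
       (h_pos M r HM Hr p s) ltac:(unfold psi; apply Rmult_le_pos; [apply Rlt_le, exp_pos|apply Rlt_le, Hphipos]) Hmu).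
    unfold a, b. lra.
Qed.

Lemma final_bound t Cphi : 0 < Cphi -> (forall s, phi s <= Cphi * exp (s / (2 * M))) -> 0 <= t < t1 ->
  / (2 * Rpower (Kc M R0 Cphi) (p - 1)) * rpow (Fcal M p r phi g eps vt t) p / Rpower (t + R0) (p - 1)
  <= / 2 * Nc t.
Proof.
  intros HC Hb Ht. assert (Hti : in_time T t) by (unfold in_time; lra).
  replace (/ 2 * Nc t) with (Nc t / 2) by field.
  apply (holder_final p _ (Gp t)); auto.
  - destruct (F_le_G t Ht) as [H1 H2]. split; auto. eapply Rle_trans; [exact H2|].
    rewrite Gi_eq by auto. unfold Gp. apply RInt_le. lra.
    apply ex_RInt_cont; intros; apply gI_cs; auto.
    apply ex_RInt_cont; intros; apply psiabs_cs; auto.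
    intros s _. unfold gI. apply Rmult_le_compat_l. unfold psi. apply Rmult_le_pos; [apply Rlt_le, exp_pos|apply Rlt_le, Hphipos].
    apply Rle_abs.
  - unfold Kc, K2, K3. pose proof (exp_pos ((2 * (2 * M + 1) + R0) / (2 * M))). pose proof (exp_pos (R0 / (2 * M))).
    assert (0 < (2 * M + 1) ^ 3) by (apply pow_lt; lra). assert (0 < (1 + 2 * M) ^ 2) by (apply pow_lt; lra).
    assert (0 < Cphi * (2 * M + 1) ^ 3 * exp ((2 * (2 * M + 1) + R0) / (2 * M))) by (apply Rmult_lt_0_compat; [apply Rmult_lt_0_compat|]; lra).
    assert (0 < 2 * M * (Cphi * (1 + 2 * M) ^ 2) * exp (R0 / (2 * M))) by (apply Rmult_lt_0_compat; [apply Rmult_lt_0_compat; [|apply Rmult_lt_0_compat]|]; lra).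
    lra.
  - lra.
  - apply Nc_ge0.
  - intros mu Hmu. pose proof (N_lower t mu Ht Hmu).
    pose proof (B_bound M r p R0 Cphi phi HM Hr Hp HR0 HC Hb phi_cont t (proj1 Ht)).
    fold (Bt t) in H0.
    assert (0 <= (p - 1) * Rpower mu p) by (apply Rmult_le_pos; [lra|apply Rlt_le, Rpower_pos]).
    assert ((p - 1) * Rpower mu p * Bt t <= (p - 1) * Rpower mu p * (Kc M R0 Cphi * (t + R0))).
    { apply Rmult_le_compat_l; auto. }
    lra.
Qed.

End Fix.

Lemma main_sol Cphi t : 0 < Cphi -> (forall s, phi s <= Cphi * exp (s / (2 * M))) -> in_time T t ->
  0 <= Fcal M p r phi g eps vt t /\
  Fcal M p r phi g eps vt t <= RintR (fun s => psi M phi t s * vt t s) /\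
  exists l, derivable_within (in_time T) (Fcal M p r phi g eps vt) t l /\
    / (2 * Rpower (Kc M R0 Cphi) (p - 1)) * rpow (Fcal M p r phi g eps vt t) p / Rpower (t + R0) (p - 1) <= l.
Proof.
  intros HC Hb Ht. unfold in_time in Ht.
  set (t1 := (t + T) / 2).
  assert (Ht1 : 0 <= t1 < T) by (unfold t1; lra).
  assert (Htt : 0 <= t < t1) by (unfold t1; lra).
  destruct (F_le_G t1 Ht1 t Htt) as [H1 H2].
  split; auto. split.
  - change (fun s => psi M phi t s * vt t s) with (gI t). rewrite (RintR_gI t1); auto; lra.
  - exists (/ 2 * Nc t1 t). split.
    + apply F_der; auto.
    + apply final_bound; auto.
Qed.

End Sol.

Theorem mainTheorem5 (M p R0 : R) (r : R -> R) (f g : R -> R)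
  (phi dphi ddphi : R -> R) (Cphi : R) :
  0 < M -> 3 / 2 <= p <= 2 -> is_RW_inverse M r -> 0 < R0 ->
  (forall s, 0 <= f s) -> (forall s, 0 <= g s) -> (exists s, g s <> 0) ->
  (forall s, R0 < Rabs s -> f s = 0 /\ g s = 0) ->
  (forall s, derivable_pt_lim phi s (dphi s)) ->
  (forall s, derivable_pt_lim dphi s (ddphi s)) -> continuity ddphi ->
  (forall s, 0 < phi s) ->
  (forall s, - ddphi s + Wfun M r s * phi s + / (4 * M ^ 2) * phi s = 0) ->
  0 < Cphi ->
  (forall s, / Cphi * exp (s / (2 * M)) <= phi s <= Cphi * exp (s / (2 * M))) ->
  exists C, 0 < C /\
    forall (eps T : R) (v vt vs vtt vts vss : R -> R -> R),
      0 < eps -> 0 < T ->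
      is_solution M p r R0 eps f g T v vt vs vtt vts vss ->
      forall t, in_time T t ->
        0 <= Fcal M p r phi g eps vt t /\
        Fcal M p r phi g eps vt t <= RintR (fun s => psi M phi t s * vt t s) /\
        exists l, derivable_within (in_time T) (Fcal M p r phi g eps vt) t l /\
          C * rpow (Fcal M p r phi g eps vt t) p / Rpower (t + R0) (p - 1) <= l.
Proof.
  intros HM Hp Hr HR0 Hf Hg _ Hs Hd Hdd Hc Hpos Hode HC Hb.
  exists (/ (2 * Rpower (Kc M R0 Cphi) (p - 1))). split.
  - apply Rinv_0_lt_compat. pose proof (Rpower_pos (Kc M R0 Cphi) (p - 1)). lra.
  - intros eps T v vt vs vtt vts vss He HT Hsol t Ht.
    apply (main_sol M p R0 r f g phi dphi ddphi HM Hp Hr HR0 Hf Hg Hs Hd Hdd Hc Hpos Hode eps T v vt vs vtt vts vss He HT Hsol Cphi t HC); auto.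
    intros s; apply Hb.
Qed.
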